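(* Let $n\ge2$ and let $\mathfrak g=\mathbb Rf_1\ltimes\mathbb R^{2n+1}$ be the Lie algebra in which $\mathbb R^{2n+1}$ is an abelian ideal and $\operatorname{ad}_{f_1}|_{\mathbb R^{2n+1}}$ is diagonalizable with eigenvalues $0,\frac1n,\frac2n,\dots,1,-\frac1n,-\frac2n,\dots,-1$ (each simple). Let $\beta^n_k=\dim H^k(\mathfrak g)$ be the Betti numbers of the Chevalley–Eilenberg cohomology of $\mathfrak g$ with trivial real coefficients. Then: (i) $\beta^n_0=1$, $\beta^n_1=2$ and $\beta^n_2=n+1$; (ii) if $n$ is even then $\beta^n_3=\frac{n(n+2)}2$, and if $n$ is odd then $\beta^n_3=\frac{(n+1)^2}2$; (iii) if $k$ is odd then $\beta^n_k$ is even; (iv) $\beta^n_{2k}\equiv\binom{n+1}k\pmod 2$.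
   Context: These are also the de Rham Betti numbers of any compact quotient of the simply connected Lie group of $\mathfrak g$ by a lattice. *)

(* Defs.v *)
From HB Require Import structures.
From mathcomp Require Import all_boot all_order all_algebra.
From mathcomp Require Import reals.
Set Implicit Arguments. Unset Strict Implicit. Unset Printing Implicit Defensive.
Import Order.TTheory GRing.Theory Num.Theory.
Local Open Scope ring_scope.

(* Chevalley--Eilenberg cohomology (trivial coefficients) of a finite-dimensional
   Lie algebra over a field F, given by structure constants in a basis
   e_0, ..., e_{m-1}:   [e_i, e_j] = \sum_l c i j l e_l.
   The k-cochains Lambda^k g^* have basis the e^S, S a k-subset of 'I_m
   (e^S is the alternating form with value 1 on (e_{s_0},...,e_{s_{k-1}}),
   s_0 < ... < s_{k-1}).  The differential is the standard one
     d w (x_0,...,x_k) = \sum_{a<b} (-1)^(a+b) w([x_a,x_b], x_0,..^a..^b..,x_k). *)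
Section CE.
Variables (F : fieldType) (m : nat) (c : 'I_m -> 'I_m -> 'I_m -> F).

Definition setpos (T : {set 'I_m}) (x : 'I_m) : nat := #|[set t in T | (t < x)%N]|.

(* value of the basis cochain e^S on the tuple (e_l, e_{r_1},...,e_{r_q}),
   r_1 < ... < r_q the elements of Rs *)
Definition ev_basis (S Rs : {set 'I_m}) (l : 'I_m) : F :=
  if (l \notin Rs) && (S == l |: Rs) then (-1) ^+ setpos Rs l else 0.

(* coefficient of e^T in d(e^S) *)
Definition ce_entry (S T : {set 'I_m}) : F :=
  \sum_(i in T) \sum_(j in T | (i < j)%N)
     (-1) ^+ (setpos T i + setpos T j) *
     \sum_(l < m) c i j l * ev_basis S (T :\ i :\ j) l.

Definition sidx (i : 'I_#|{set 'I_m}|) : {set 'I_m} := enum_val i.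

(* matrix of the total differential on Lambda g^* (row-vector convention:
   the cochain u is sent to u *m ce_diff) *)
Definition ce_diff : 'M[F]_#|{set 'I_m}| :=
  \matrix_(i, j) ce_entry (sidx i) (sidx j).

Definition ce_deg (k : nat) : 'M[F]_#|{set 'I_m}| :=
  \matrix_(i, j) (if (i == j) && (#|sidx i| == k) then 1 else 0).

Definition ce_cocycles (k : nat) := (ce_deg k :&: kermx ce_diff)%MS.
Definition ce_coboundaries (k : nat) : 'M[F]_#|{set 'I_m}| :=
  match k with 0 => 0 | k'.+1 => ce_deg k' *m ce_diff end.

Definition betti (k : nat) : nat :=
  (\rank (ce_cocycles k) - \rank (ce_coboundaries k))%N.
End CE.

(* The Lie algebra g = R f_1 |x R^{2n+1}: basis e_0 = f_1, e_1,...,e_{2n+1}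
   spanning the abelian ideal, with [f_1, e_j] = lambda_j e_j where
   lambda_j = (j - (n+1))/n, so that the lambda_j run through
   -1, ..., -1/n, 0, 1/n, ..., 1, each once. *)
Definition gweight (R : realType) (n : nat) (j : nat) : R :=
  ((j%:R - n.+1%:R) / n%:R).

Definition g_struct (R : realType) (n : nat)
  (i j l : 'I_(n.*2.+2)) : R :=
  if (val i == 0%N) && (val j != 0%N) && (l == j) then gweight R n j
  else if (val j == 0%N) && (val i != 0%N) && (l == i) then - gweight R n i
  else 0.
Arguments g_struct R n i j l : clear implicits.

(* Main.v *)
Require Import Defs.
From mathcomp Require Import all_boot all_order all_algebra.
From mathcomp Require Import reals.
From mathcomp Require Import zify ring lra.
Set Implicit Arguments. Unset Strict Implicit. Unset Printing Implicit Defensive.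
Import Order.TTheory GRing.Theory Num.Theory.
Local Open Scope ring_scope.

Fixpoint cnt (L : seq int) (k : nat) (s : int) {struct L} : nat :=
  match L with
  | [::] => ((k == 0%N) && (s == 0) : nat)
  | x :: L' => (cnt L' k s + if k is k'.+1 then cnt L' k' (s - x) else 0)%N
  end.

Fixpoint Lst (n : nat) : seq int :=
  if n is n'.+1 then (n%:Z) :: (- n%:Z) :: Lst n' else [:: 0].

Lemma cnt0 L s : cnt L 0 s = (s == 0).
Proof. by elim: L s => [|x L IH] s /=; rewrite ?addn0 ?IH. Qed.

Lemma cnt_neg L k s : cnt (map -%R L) k (- s) = cnt L k s.
Proof.
elim: L k s => [|x L IH] k s /=; first by rewrite oppr_eq0.
rewrite IH; case: k => [|k] //; by rewrite -opprD IH.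
Qed.

Lemma cnt_swap x y L k s : cnt (x :: y :: L) k s = cnt (y :: x :: L) k s.
Proof.
case: k => [|[|k]] /=; rewrite ?addn0 //.
  by rewrite addnAC.
rewrite (addrAC s (-y) (-x)) !addnA; congr (_ + _)%N; by rewrite addnAC.
Qed.

Lemma Lst_neg n k s : cnt (map -%R (Lst n)) k s = cnt (Lst n) k s.
Proof.
elim: n k s => [|n IH] k s; first by rewrite /= oppr0.
rewrite [map _ _]/= opprK cnt_swap /=.
case: k => [|[|k]]; by rewrite ?IH.
Qed.

Lemma Lst_sym n k s : cnt (Lst n) k (- s) = cnt (Lst n) k s.
Proof. by rewrite -Lst_neg cnt_neg. Qed.

Lemma cnt1 n s : cnt (Lst n) 1 s = ((- n%:Z <= s) && (s <= n%:Z)).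
Proof.
elim: n s => [|n IH] s /=; rewrite ?cnt0 ?IH.
  rewrite ?addn0 ?subr0; lia.
rewrite ?addn0; lia.
Qed.

Lemma cnt2 n t : cnt (Lst n) 2 t = (n - (absz t)./2)%N.
Proof.
elim: n t => [|n IH] t /=; rewrite ?cnt0 ?cnt1 ?IH //.
case: t => p; lia.
Qed.

Lemma cnt3 n : (cnt (Lst n.+1) 3 0 = cnt (Lst n) 3 0 + (n./2).*2 + 1)%N.
Proof.
rewrite /= ?cnt0 ?cnt1 ?cnt2. lia.
Qed.

Lemma cnt_par n k : odd (cnt (Lst n) k 0) = odd 'C(n, k./2).
Proof.
elim: n k => [|n IH] k.
  by case: k => [|[|k]].
case: k => [|[|k]].
- by rewrite /= cnt0.
- rewrite /=. have E1 : (0 - - n.+1%:Z == 0) = false by lia.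
  have E2 : (0 - n.+1%:Z == 0) = false by lia.
  by rewrite !cnt0 E1 E2 !addn0 IH (_ : 1./2 = 0)%N // bin0.
- have -> : k.+2./2 = (k./2).+1 by [].
  rewrite binS [cnt (Lst n.+1) _ _]/= !sub0r opprK -(Lst_sym n k.+1 (n.+1%:Z)) !oddD addNr !IH.
  have -> : k.+2./2 = (k./2).+1 by [].
  by case: (odd (cnt (Lst n) k.+1 _)); case: (odd 'C(n, k./2)); case: (odd 'C(n, (k./2).+1)).
Qed.

Lemma Z3 n : (cnt (Lst n) 3 0 + n = if odd n then (n + 1) ^ 2 %/ 2 else n * (n + 2) %/ 2)%N.
Proof.
elim: n => [|n IH]; first by [].
rewrite cnt3 /=.
have := odd_double_half n.
case: (odd n) IH => /= IH H; move: IH; rewrite -H; set q := n./2; 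
  move: (cnt _ 3 0) => c; rewrite ?half_bit_double ?half_double; nia.
Qed.
Lemma card_split (T : finType) (p q : pred T) :
  #|[set x | p x]| = (#|[set x | p x && q x]| + #|[set x | p x && ~~ q x]|)%N.
Proof.
rewrite -(cardsID [set x | q x] [set x | p x]); congr (_ + _)%N; apply: eq_card => x;
by rewrite !inE // andbC.
Qed.

Lemma card_cnt (T : finType) (w : T -> int) (r : seq T) k s : uniq r ->
  #|[set S : {set T} | (S \subset [set x in r]) && (#|S| == k) &&
                        (\sum_(j in S) w j == s)]| = cnt (map w r) k s.
Proof.
elim: r k s => [|x r IH] k s /=.
  move=> _.
  have -> : [set S : {set T} | (S \subset [set x in [::]]) && (#|S| == k) &&
                        (\sum_(j in S) w j == s)] =
            if (k == 0%N) && (s == 0) then [set set0] else set0.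
    apply/setP => S; rewrite !inE.
    have -> : (S \subset [set x in [::]]) = (S == set0).
      by rewrite -subset0; apply: eq_subset_r => y; rewrite !inE.
    case: eqP => [->|] /=; last first.
      by case: ifP; rewrite ?inE => // _ H; symmetry; apply/negbTE/eqP.
    rewrite cards0 big_set0; case: ifP => [/andP[/eqP<- /eqP<-]|H]; rewrite ?inE ?eqxx //.
    by rewrite eq_sym [0 == s]eq_sym H.
  by case: ifP; rewrite ?cards1 ?cards0.
case/andP=> xr ur.
rewrite (card_split _ (fun S : {set T} => x \in S)) -IH //.
rewrite addnC; congr (_ + _)%N.
  apply: eq_card => S; rewrite !inE.
  case xS: (x \in S); rewrite ?andbF //= ?andbT.
    symmetry; apply/negbTE; apply/negP => /andP[/andP[/subsetP H _] _].
    by have := H x xS; rewrite inE (negbTE xr).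
  congr (_ && _ && _).
  apply/idP/idP => /subsetP H; apply/subsetP => y yS; have := H y yS; rewrite !inE //.
    by case/predU1P => // E; rewrite E xS in yS.
  by move=> ->; rewrite orbT.
case: k => [|k].
  apply/eqP; rewrite cards_eq0; apply/eqP/setP => S; rewrite !inE.
  apply/negbTE; apply/negP => /andP[/andP[/andP[_ /eqP/cards0_eq E] _] xS].
  by rewrite E inE in xS.
rewrite -IH.
set D := [set S : {set T} | _ ].
have -> : [set S : {set T} | (S \subset [set x0 in x :: r]) && (#|S| == k.+1) &&
              (\sum_(j in S) w j == s) && (x \in S)] = (fun S => x |: S) @: D.
  apply/setP => S; rewrite !inE; apply/idP/imsetP.
    case/andP=> /andP[/andP[sub /eqP cS] /eqP sS] xS.
    exists (S :\ x); last by rewrite setD1K.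
    rewrite !inE; apply/andP; split; first (apply/andP; split).
    - apply/subsetP => y; rewrite !inE => /andP[yx yS].
      by have := subsetP sub y yS; rewrite !inE (negbTE yx).
    - by move: cS; rewrite (cardsD1 x S) xS => ?; apply/eqP; lia.
    - by apply/eqP; rewrite -sS (big_setD1 _ xS) /=; ring.
  case=> S'; rewrite !inE => /andP[/andP[sub /eqP cS] /eqP sS] ->.
  have xS' : x \notin S' by apply/negP => /(subsetP sub); rewrite inE (negbTE xr).
  rewrite setU11 andbT cardsU1 xS' cS eqxx andbT big_setU1 //= sS addrC subrK eqxx andbT.
  apply/subsetP => y; rewrite !inE => /predU1P[->|/(subsetP sub)]; first by rewrite eqxx.
  by rewrite inE => ->; rewrite orbT.
apply: card_in_imset => S1 S2; rewrite !inE => /andP[/andP[s1 _] _] /andP[/andP[s2 _] _] E.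
have x1 : x \notin S1 by apply/negP => /(subsetP s1); rewrite inE (negbTE xr).
have x2 : x \notin S2 by apply/negP => /(subsetP s2); rewrite inE (negbTE xr).
by rewrite -(setU1K x1) -(setU1K x2) E.
by [].
Qed.
Lemma rank_partial (F : fieldType) N N' (M : 'M[F]_(N,N')) (A : {set 'I_N})
  (a : 'I_N -> F) (g : 'I_N -> 'I_N') :
  (forall x, x \in A -> a x != 0) -> {in A &, injective g} ->
  (forall x j, M x j = if x \in A then a x * (g x == j)%:R else 0) ->
  \rank M = #|A|.
Proof.
move=> anz ginj ME.
pose f (i : 'I_#|A|) : 'I_N := enum_val i.
have fA i : f i \in A by exact: enum_valP.
have finj : injective f by exact: enum_val_inj.
pose P : 'M[F]_(#|A|, N) := \matrix_(i, x) ((f i == x)%:R).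
pose B : 'M[F]_(#|A|, N') := \matrix_(i, j) (a (f i) * (g (f i) == j)%:R).
have BE : P *m M = B.
  apply/matrixP => i j; rewrite !mxE (bigD1 (f i)) //= big1 ?addr0.
    by rewrite mxE eqxx mul1r ME fA.
  by move=> x xne; rewrite mxE eq_sym (negbTE xne) mul0r.
have MPB : M = P^T *m B.
  apply/matrixP => x j; rewrite !mxE.
  case xA: (x \in A) => [|]; last first.
    rewrite ME xA big1 // => i _; rewrite !mxE.
    by case: eqP => [E|_]; [rewrite -E fA in xA | rewrite mul0r].
  rewrite (bigD1 (enum_rank_in xA x)) //= big1 ?addr0.
    by rewrite !mxE /f enum_rankK_in // eqxx mul1r ME xA.
  move=> i ine; rewrite !mxE; case: eqP => [E|_]; last by rewrite mul0r.
  exfalso; move/eqP: ine; apply; apply: finj.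
  by rewrite {2}/f enum_rankK_in.
pose Q : 'M[F]_(#|A|, N') := \matrix_(i, j) ((g (f i) == j)%:R).
have BQ : B *m Q^T = diag_mx (\row_i a (f i)).
  apply/matrixP => i i'; rewrite !mxE (bigD1 (g (f i))) //= big1 ?addr0.
    rewrite !mxE eqxx mulr1.
    case: (eqVneq i i') => [<-|ne]; first by rewrite eqxx mulr1.
    rewrite mulr0n; case: eqP => [E|]; last by rewrite mulr0.
    by move: ne; rewrite (finj _ _ (ginj _ _ (fA _) (fA _) E)) eqxx.
  by move=> j jne; rewrite !mxE eq_sym (negbTE jne) mulr0 mul0r.
apply/eqP; rewrite eqn_leq; apply/andP; split.
  rewrite MPB; apply: leq_trans (mxrankM_maxr _ _) _; exact: rank_leq_row.
have : \rank (B *m Q^T) = #|A|.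
  rewrite BQ mxrank_unit // unitmxE det_diag unitfE prodf_seq_neq0.
  by apply/allP => i _; rewrite mxE anz.
move=> <-; apply: leq_trans (mxrankM_maxl _ _) _.
by rewrite -BE mxrankM_maxr.
Qed.
Section A2.
Variables (R : realType) (n : nat).
Local Notation m := (n.*2.+2).
Local Notation o := (ord0 : 'I_m).

Lemma val0E (i : 'I_m) : (val i == 0%N) = (i == o).
Proof. by apply/eqP/eqP => [h|->//]; apply: val_inj. Qed.

Lemma setposE (T : {set 'I_m}) (j : 'I_m) : o \in T -> (0 < j)%N ->
  setpos T j = (setpos (T :\ o :\ j) j).+1.
Proof.
move=> oT j0; rewrite /setpos (cardsD1 o) inE oT j0 /= add1n; congr _.+1.
apply: eq_card => t; rewrite !inE.
case: (eqVneq t o) => [->|to] /=; first by rewrite andbF.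
by case: (eqVneq t j) => [->|tj] /=; rewrite ?ltnn ?andbF.
Qed.

Lemma ce_entryE (S T : {set 'I_m}) :
  ce_entry (g_struct R n) S T =
  if (o \notin S) && (T == o |: S) then - \sum_(j in S) gweight R n j else 0.
Proof.
have inner : forall i j : 'I_m, (i < j)%N ->
  \sum_(l < m) g_struct R n i j l * ev_basis R S (T :\ i :\ j) l =
  if i == o then gweight R n j * ev_basis R S (T :\ i :\ j) j else 0.
  move=> i j ij.
  have j0 : (val j == 0%N) = false by apply/negbTE; rewrite -lt0n; exact: leq_ltn_trans ij.
  rewrite (bigD1 j) //= big1 ?addr0.
    rewrite /g_struct eqxx j0 /= andbT val0E.
    by case: (i == o); rewrite ?mul0r.
  move=> l lj; rewrite /g_struct (negbTE lj) andbF /= j0 /= mul0r //.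
rewrite /ce_entry.
rewrite (eq_bigr (fun i : 'I_m => \sum_(j in T | (i < j)%N) (-1) ^+ (setpos T i + setpos T j) *
   (if i == o then gweight R n j * ev_basis R S (T :\ i :\ j) j else 0))); last first.
  by move=> i _; apply: eq_bigr => j /andP[_ ij]; rewrite inner.
have cond : (o \notin S) && (T == o |: S) = (o \in T) && (S == T :\ o).
  apply/andP/andP => [[oS /eqP ->]|[oT /eqP ->]]; first by rewrite setU11 setU1K.
  by rewrite setD11 setD1K.
rewrite cond.
case oT: (o \in T); last first.
  rewrite big1 // => i iT; rewrite big1 // => j _.
  have -> : (i == o) = false by apply: contraFF oT => /eqP <-.
  by rewrite mulr0.
rewrite (bigD1 o) //= [X in _ + X]big1 ?addr0; last first.
  by move=> i /andP[_ /negbTE io]; rewrite io big1 // => j _; rewrite mulr0.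
have p0 : setpos T o = 0%N.
  by apply/eqP; rewrite cards_eq0; apply/eqP/setP => t; rewrite !inE ltn0 andbF.
rewrite (eq_bigr (fun j : 'I_m => if S == T :\ o then - gweight R n j else 0)); last first.
  move=> j /andP[jT j0]; rewrite p0 add0n (setposE oT j0) /ev_basis.
  have jo : j != o by rewrite -val0E -lt0n.
  have jn : j \notin T :\ o :\ j by rewrite !inE eqxx.
  have jU : j |: (T :\ o :\ j) = T :\ o. rewrite setD1K // !inE jT andbT; exact jo.
  rewrite jn jU /=; case: ifP => _; last by rewrite !mulr0.
  rewrite mulrCA -exprD addSn exprS.
  have -> : (-1) ^+ (setpos (T :\ o :\ j) j + setpos (T :\ o :\ j) j) = 1 :> R.
    by rewrite -signr_odd oddD addbb.
  by rewrite mulr1 mulrN1.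
case: ifP => [/eqP ->|_]; last by rewrite big1.
rewrite sumrN; congr (- _); apply: eq_bigl => j; rewrite !inE -val0E -lt0n andbC //.
Qed.

Lemma mem_Lst k x : (x \in Lst k) = (- k%:Z <= x) && (x <= k%:Z).
Proof.
elim: k => [|k IH] /=; first by rewrite inE; lia.
rewrite !inE IH; lia.
Qed.

Lemma uniq_Lst k : uniq (Lst k).
Proof.
elim: k => [|k IH] //=; rewrite IH !inE !mem_Lst andbT; lia.
Qed.

Definition wint (j : 'I_m) : int := (j%:Z - n.+1%:Z).
Definition rr : seq 'I_m := [seq (inord (absz (x + n.+1%:Z)) : 'I_m) | x <- Lst n].

Lemma map_rr : map wint rr = Lst n.
Proof.
rewrite /rr -map_comp -[RHS]map_id; apply/eq_in_map => x.
rewrite mem_Lst /= /wint => H; rewrite inordK; lia.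
Qed.

Lemma uniq_rr : uniq rr.
Proof.
rewrite map_inj_in_uniq ?uniq_Lst // => x y; rewrite !mem_Lst => Hx Hy E.
have := congr1 val E; rewrite /= !inordK; lia.
Qed.

Lemma mem_rr (j : 'I_m) : (j \in rr) = (j != o).
Proof.
apply/mapP/idP => [[x] xL ->|jo].
  rewrite -val0E /= inordK; move: xL; rewrite mem_Lst; lia.
exists (j%:Z - n.+1%:Z).
  rewrite mem_Lst; move: jo; rewrite -val0E /=; have := ltn_ord j; lia.
apply: ord_inj; rewrite /= inordK; have := ltn_ord j; lia.
Qed.

Lemma wS_eq0 (n0 : (0 < n)%N) (S : {set 'I_m}) :
  (\sum_(j in S) gweight R n j == 0) = (\sum_(j in S) wint j == 0).
Proof.
rewrite /gweight -mulr_suml mulf_eq0 invr_eq0 pnatr_eq0 (negbTE (lt0n_neq0 n0)) orbF.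
rewrite -(intr_eq0 R) rmorph_sum /=; congr (_ == 0); apply: eq_bigr => j _.
by rewrite /wint rmorphB /= -!pmulrn.
Qed.

Lemma sub_rr (S : {set 'I_m}) : (S \subset [set x in rr]) = (o \notin S).
Proof.
apply/subsetP/idP => [H|oS x xS]; last first.
  rewrite inE mem_rr; apply: contraNneq oS => <-; exact: xS.
apply/negP => /H; rewrite inE mem_rr.
by rewrite eqxx.
Qed.

Lemma Zcnt (n0 : (0 < n)%N) k :
  #|[set S : {set 'I_m} | (#|S| == k) && (o \notin S) &&
       (\sum_(j in S) gweight R n j == 0)]| = cnt (Lst n) k 0.
Proof.
rewrite -map_rr -card_cnt ?uniq_rr //; apply: eq_card => S; rewrite !inE sub_rr wS_eq0 //.
by case: (#|S| == k); case: (o \in S).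
Qed.

Lemma card_sidx (P : pred {set 'I_m}) :
  #|[set i : 'I_#|{set 'I_m}| | P (sidx i)]| = #|[set S | P S]|.
Proof.
rewrite -(card_imset _ (@enum_val_inj _ _)); apply: eq_card => S.
rewrite inE; apply/imsetP/idP => [[i]|PS]; first by rewrite inE => Pi ->.
by exists (enum_rank S); rewrite ?inE /sidx enum_rankK.
Qed.

Lemma rank_deg k : \rank (ce_deg R m k) = #|[set S : {set 'I_m} | #|S| == k]|.
Proof.
rewrite -card_sidx; apply: (@rank_partial _ _ _ _ _ (fun _ => 1) id) => //.
  by move=> x _; rewrite oner_eq0.
move=> x j; rewrite mxE inE mul1r; case: (#|sidx x| == k); rewrite ?andbT ?andbF //.
by case: eqP.
Qed.

Lemma rank_degD k : \rank (ce_deg R m k *m ce_diff (g_struct R n)) =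
  #|[set S : {set 'I_m} | (#|S| == k) && (o \notin S) &&
       (\sum_(j in S) gweight R n j != 0)]|.
Proof.
rewrite -card_sidx.
apply: (@rank_partial _ _ _ _ _ (fun x => - \sum_(j in sidx x) gweight R n j)
          (fun x => enum_rank (o |: sidx x))).
- by move=> x; rewrite inE oppr_eq0 => /andP[].
- move=> x y; rewrite !inE => /andP[/andP[_ xo] _] /andP[/andP[_ yo] _] /enum_rank_inj E.
  by move: (congr1 (fun S => S :\ o) E); rewrite /= !setU1K //; apply: enum_val_inj.
move=> x j; rewrite mxE (bigD1 x) //= big1 ?addr0; last first.
  by move=> y yx; rewrite mxE eq_sym (negbTE yx) mul0r.
rewrite !mxE eqxx /= ce_entryE inE.
have -> : (sidx j == o |: sidx x) = (enum_rank (o |: sidx x) == j).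
  by rewrite /sidx -(inj_eq enum_rank_inj) enum_valK eq_sym.
case: (#|sidx x| == k); rewrite ?mul0r ?mul1r //=.
set w := \sum_(j0 in _) _; set e := (enum_rank _ == j).
case: e; case: (_ \notin _) => //=; have [->|wn] := eqVneq w 0; rewrite ?oppr0 ?mulr1 ?mulr0 //.
Qed.

Lemma card_shift k :
  #|[set S : {set 'I_m} | (#|S| == k.+1) && (o \in S)]| =
  #|[set S : {set 'I_m} | (#|S| == k) && (o \notin S)]|.
Proof.
rewrite -[RHS](@card_in_imset _ _ (fun S => o |: S)); last first.
  by move=> S1 S2; rewrite !inE => /andP[_ h1] /andP[_ h2] E;
     rewrite -(setU1K h1) -(setU1K h2) E.
apply: eq_card => S; rewrite inE; apply/idP/imsetP => [/andP[/eqP cS oS]|[S' ]].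
  exists (S :\ o); last by rewrite setD1K.
  rewrite inE !inE eqxx /=; move: cS; rewrite (cardsD1 o S) oS => H; rewrite andbT; apply/eqP; move: H; rewrite add1n; by case.
move=> HS ->; move: HS; rewrite inE => /andP[/eqP cS oS].
by rewrite setU11 andbT cardsU1 oS cS.
Qed.

Lemma card_deg0 : #|[set S : {set 'I_m} | (#|S| == 0%N) && (o \in S)]| = 0%N.
Proof.
apply/eqP; rewrite cards_eq0; apply/eqP/setP => S; rewrite !inE.
by apply/negbTE/negP => /andP[/eqP/cards0_eq -> ]; rewrite inE.
Qed.

Lemma betti_E (n0 : (0 < n)%N) k : betti (g_struct R n) k =
  (cnt (Lst n) k 0 + (if k is k'.+1 then cnt (Lst n) k' 0 else 0))%N.
Proof.
have split1 : forall j, #|[set S : {set 'I_m} | #|S| == j]| =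
  (#|[set S : {set 'I_m} | (#|S| == j) && (o \in S)]| +
   #|[set S : {set 'I_m} | (#|S| == j) && (o \notin S) && (\sum_(i in S) gweight R n i == 0)%R]| +
   #|[set S : {set 'I_m} | (#|S| == j) && (o \notin S) && (\sum_(i in S) gweight R n i != 0)%R]|)%N.
  move=> j; rewrite (card_split _ (fun S : {set 'I_m} => o \in S)) -addnA; congr (_ + _)%N.
  exact: card_split.
have split2 : forall j, #|[set S : {set 'I_m} | (#|S| == j) && (o \notin S)]| =
  (#|[set S : {set 'I_m} | (#|S| == j) && (o \notin S) && (\sum_(i in S) gweight R n i == 0)%R]| +
   #|[set S : {set 'I_m} | (#|S| == j) && (o \notin S) && (\sum_(i in S) gweight R n i != 0)%R]|)%N.
  move=> j; exact: card_split.
rewrite /betti /ce_cocycles.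
have := mxrank_mul_ker (ce_deg R m k) (ce_diff (g_struct R n)).
rewrite rank_degD rank_deg split1 => H.
have -> : \rank (ce_deg R m k :&: kermx (ce_diff (g_struct R n)))%MS =
  (#|[set S : {set 'I_m} | (#|S| == k) && (o \in S)]| +
   #|[set S : {set 'I_m} | (#|S| == k) && (o \notin S) && (\sum_(i in S) gweight R n i == 0)%R]|)%N.
  lia.
rewrite -Zcnt //.
case: k H => [|k] H /=.
  by rewrite mxrank0 subn0 addn0 card_deg0.
rewrite rank_degD card_shift split2 -Zcnt //; lia.
Qed.

End A2.

Lemma half_double_add1 j : (j.*2.+1)./2 = j.
Proof. lia. Qed.

Local Close Scope ring_scope.
Unset Implicit Arguments.
Set Strict Implicit.

Theorem proposition4p14 (R : realType) (n : nat) : (2 <= n)%N ->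
  let b := betti (g_struct R n) in
  [/\ [/\ b 0 = 1%N, b 1 = 2%N & b 2 = n.+1],
      b 3 = (if odd n then (n + 1) ^ 2 %/ 2 else n * (n + 2) %/ 2),
      (forall k, odd k -> ~~ odd (b k)) &
      (forall k, b (2 * k)%N = 'C(n + 1, k) %[mod 2])].
Proof.
move=> n2 b; have n0 : (0 < n)%N by lia.
have c0 : cnt (Lst n) 0 0 = 1%N by rewrite cnt0.
have c1 : cnt (Lst n) 1 0 = 1%N by rewrite cnt1; lia.
have c2 : cnt (Lst n) 2 0 = n by rewrite cnt2; lia.
rewrite /b; split.
- by rewrite !betti_E // c0 c1 c2; split; lia.
- by rewrite betti_E // c2 Z3.
- move=> k ok; rewrite -(odd_double_half k) ok add1n betti_E // oddD !cnt_par.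
  by rewrite half_double_add1 doubleK addbb.
move=> k; case: k => [|k]; first by rewrite muln0 betti_E // c0 bin0.
have -> : (2 * k.+1 = (k.*2.+1).+1)%N by lia.
rewrite betti_E // !modn2 oddD !cnt_par half_double_add1.
have -> : ((k.*2.+1).+1)./2 = k.+1 by lia.
by rewrite addn1 binS oddD.
Qed.
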